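(* Fix $\mathsf{SNR}>0$ and integers $L\ge1$, $M\ge1$. Let $\{h_{i,j}\}_{i\ge1,\,1\le j\le L}$ be i.i.d. $\mathcal{CN}(0,1)$ and set $C_i=\frac1L\sum_{j=1}^L\log_2(1+\mathsf{SNR}|h_{i,j}|^2)$. For an initial rate $R_{\mathrm{init}}>0$ define $\mathcal{T}(R_{\mathrm{init}})=\min\bigl(M,\ \min\{t\ge1:\sum_{i=1}^tC_i>R_{\mathrm{init}}\}\bigr)$, the post-HARQ outage probability $\varepsilon(R_{\mathrm{init}})=\mathbb{P}\bigl[\sum_{i=1}^M C_i\le R_{\mathrm{init}}\bigr]$, and the HARQ goodput $$\eta_{\mathrm{HARQ}}(R_{\mathrm{init}})=\frac{R_{\mathrm{init}}\,(1-\varepsilon(R_{\mathrm{init}}))}{\mathbb{E}[\mathcal{T}(R_{\mathrm{init}})]}.$$ For a non-HARQ system with diversity order $ML$, define for $R>0$ the goodput $g_{ML}(R)=R\,(1-\varepsilon_{ML}(R))$ with $\varepsilon_{ML}(R)=\mathbb{P}\bigl[\frac{1}{ML}\sum_{k=1}^{ML}\log_2(1+\mathsf{SNR}|g_k|^2)\le R\bigr]$, $g_k$ i.i.d. $\mathcal{CN}(0,1)$, and let $R^\star_{ML}$ be the largest maximizer of $g_{ML}$ over $R>0$ (assumed to exist). Then every maximizer $R^\star_{\mathrm{init}}$ of $\eta_{\mathrm{HARQ}}$ over $R_{\mathrm{init}}>0$ satisfies $$\frac{R^\star_{\mathrm{init}}}{M}\le R^\star_{ML},$$ i.e., the optimal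 HARQ initial rate, divided by $M$, is at most the optimal transmitted rate of the non-HARQ system with diversity order $ML$.
   Context: Model: Rayleigh block fading; each HARQ round spans $L$ independently faded blocks with gains $h_{i,j}$, independent across rounds; incremental-redundancy HARQ accumulates mutual information across rounds, so a packet is decoded in the first round $t$ at which the accumulated mutual information $\sum_{i\le t}C_i$ exceeds $R_{\mathrm{init}}$; at most $M$ rounds are allowed, after which (if still undecoded) a post-HARQ outage occurs and the HARQ process restarts. $\mathcal{CN}(0,1)$ denotes a circularly symmetric complex Gaussian with unit variance. *)

(* Defs.v *)
From HB Require Import structures.
From mathcomp Require Import all_boot all_order all_algebra.
From mathcomp Require Import all_classical all_reals all_analysis.
Set Implicit Arguments. Unset Strict Implicit. Unset Printing Implicit Defensive.
Import Order.TTheory GRing.Theory Num.Theory.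
Import numFieldNormedType.Exports.
Local Open Scope classical_set_scope.
Local Open Scope ring_scope.

Definition log2 {R : realType} (x : R) : R := ln x / ln 2.

Definition mutually_independent {d} {T : measurableType d} {R : realType}
  (P : probability T R) (I : eqType) (X : I -> {mfun T >-> R}) : Prop :=
  forall (s : seq I) (B : I -> set R), uniq s -> (forall i, measurable (B i)) ->
    P (\bigcap_(i in [set i | i \in s]) (X i @^-1` B i)) =
    (\prod_(i <- s) P (X i @^-1` B i))%E.

(* (hr i) + sqrt(-1) (hi i), i : I, is an i.i.d. family of CN(0,1) variables:
   all real and imaginary parts are mutually independent, each N(0, 1/2)
   (standard deviation sqrt(1/2)). *)
Definition iid_CN01 {d} {T : measurableType d} {R : realType}
  (P : probability T R) (I : eqType) (hr hi : I -> {mfun T >-> R}) : Prop :=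
  mutually_independent P (fun p : I * bool => if p.2 then hr p.1 else hi p.1) /\
  (forall i B, measurable B ->
     distribution P (hr i) B = normal_prob 0 (Num.sqrt (1 / 2)) B /\
     distribution P (hi i) B = normal_prob 0 (Num.sqrt (1 / 2)) B).

Definition sqnorm {d} {T : measurableType d} {R : realType}
  (hr hi : {mfun T >-> R}) (w : T) : R := hr w ^+ 2 + hi w ^+ 2.

(* Mutual information of round i (rounds indexed from 0, i.e. round i+1 of the
   paper): C_i = 1/L sum_{j<L} log2(1 + SNR |h_{i,j}|^2). *)
Definition Cround {d} {T : measurableType d} {R : realType} (SNR : R) (L : nat)
  (hr hi : nat -> 'I_L -> {mfun T >-> R}) (i : nat) (w : T) : R :=
  (L%:R)^-1 * \sum_(j < L) log2 (1 + SNR * sqnorm (hr i j) (hi i j) w).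

(* T(Rinit) = min(M, min{t >= 1 : sum_{i<=t} C_i > Rinit}) (min of empty set = +oo) *)
Definition Tharq {d} {T : measurableType d} {R : realType} (SNR : R) (L M : nat)
  (hr hi : nat -> 'I_L -> {mfun T >-> R}) (Rinit : R) (w : T) : nat :=
  \big[minn/M]_(1 <= t < M.+1 | Rinit < \sum_(i < t) Cround SNR hr hi i w) t.

Definition eps_harq {d} {T : measurableType d} {R : realType}
  (P : probability T R) (SNR : R) (L M : nat)
  (hr hi : nat -> 'I_L -> {mfun T >-> R}) (Rinit : R) : R :=
  fine (P [set w | \sum_(i < M) Cround SNR hr hi i w <= Rinit]).

Definition eta_harq {d} {T : measurableType d} {R : realType}
  (P : probability T R) (SNR : R) (L M : nat)
  (hr hi : nat -> 'I_L -> {mfun T >-> R}) (Rinit : R) : R :=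
  Rinit * (1 - eps_harq P SNR M hr hi Rinit)
  / fine ('E_P[fun w => (Tharq SNR M hr hi Rinit w)%:R]).

Definition eps_div {d} {T : measurableType d} {R : realType}
  (P : probability T R) (SNR : R) (N : nat)
  (gr gi : 'I_N -> {mfun T >-> R}) (Rt : R) : R :=
  fine (P [set w | (N%:R)^-1 *
          \sum_(k < N) log2 (1 + SNR * sqnorm (gr k) (gi k) w) <= Rt]).

Definition goodput_div {d} {T : measurableType d} {R : realType}
  (P : probability T R) (SNR : R) (N : nat)
  (gr gi : 'I_N -> {mfun T >-> R}) (Rt : R) : R :=
  Rt * (1 - eps_div P SNR gr gi Rt).

(* Main.v *)
Require Import Defs.
From HB Require Import structures.
From mathcomp Require Import all_boot all_order all_algebra.
From mathcomp Require Import all_classical all_reals all_analysis.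
From mathcomp Require Import measurable_realfun.
Import Order.TTheory GRing.Theory Num.Theory.
Local Open Scope classical_set_scope.
Local Open Scope ring_scope.

Section law.
Variables (R : realType) (K : finType).
Definition vecR := K -> R.
HB.instance Definition _ := gen_eqMixin vecR.
HB.instance Definition _ := gen_choiceMixin vecR.
HB.instance Definition _ := isPointed.Build vecR (fun _ => 0).

Definition rectG : set (set vecR) := [set A | exists B : K -> set R,
  (forall k, measurable (B k)) /\ A = [set f : vecR | forall k, B k (f k)]].
Local Notation FT := (g_sigma_algebraType rectG).

Lemma rectG_setI : setI_closed rectG.
Proof.
move=> _ _ [B [mB ->]] [B' [mB' ->]]; exists (fun k => B k `&` B' k); split.
  by move=> k; apply: measurableI.
apply/seteqP; split=> f /=.
  by move=> [h1 h2] k; split.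
by move=> h; split=> k; case: (h k).
Qed.

Lemma rectG_T : rectG setT.
Proof. by exists (fun=> setT); split => //; apply/seteqP; split. Qed.

Lemma proj_meas (k : K) : measurable_fun [set: FT] (fun f : FT => f k).
Proof.
move=> _ B mB; rewrite setTI; apply: sub_sigma_algebra.
exists (fun j => if j == k then B else setT); split.
  by move=> j; case: eqP.
apply/seteqP; split=> f /=.
  by move=> fB j; case: eqP => // ->.
by move=> /(_ k); rewrite eqxx.
Qed.

Section vecmap.
Context d (T : measurableType d) (X : K -> {mfun T >-> R}).
Definition vecX (w : T) : FT := fun k => X k w.

Lemma vecX_rect (B : K -> set R) :
  vecX @^-1` [set f : vecR | forall k, B k (f k)] =
  \bigcap_(k in [set k | k \in enum K]) (X k @^-1` B k).
Proof.
apply/seteqP; split=> w /=.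
  by move=> h k _; exact: h.
by move=> h k; apply: h; rewrite /= mem_enum.
Qed.

Lemma mvecX : measurable_fun [set: T] vecX.
Proof.
apply: (@measurability _ _ _ FT _ _ rectG) => //.
move=> _ [A [B [mB ->]] <-]; rewrite setTI vecX_rect.
apply: fin_bigcap_measurable; first exact: finite_finset.
move=> k _; rewrite -[X in measurable X]setTI; exact: (measurable_funP (X k)).
Qed.

HB.instance Definition _ := isMeasurableFun.Build _ _ _ _ vecX mvecX.
End vecmap.
Arguments vecX {d T} X.

Lemma law_eq d (T : measurableType d) d' (T' : measurableType d')
  (P : probability T R) (P' : probability T' R)
  (X : K -> {mfun T >-> R}) (Y : K -> {mfun T' >-> R}) :
  mutually_independent P X -> mutually_independent P' Y ->
  (forall k B, measurable B -> P (X k @^-1` B) = P' (Y k @^-1` B)) ->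
  forall A : set FT, measurable A -> P (vecX X @^-1` A) = P' (vecX Y @^-1` A).
Proof.
move=> iX iY mar A mA.
apply: (@measure_unique _ R FT rectG (fun=> setT) erefl rectG_setI (fun=> rectG_T) _
  (distribution P (vecX X)) (distribution P' (vecX Y)) _ _ A mA).
- by apply/seteqP; split => // x _; exists 0%N.
- move=> _ [B [mB ->]].
  rewrite -[LHS]/(P (vecX X @^-1` _)) -[RHS]/(P' (vecX Y @^-1` _)) !vecX_rect.
  rewrite (iX (enum K) B (enum_uniq _) mB) (iY (enum K) B (enum_uniq _) mB).
  by apply: eq_bigr => k _; exact: mar.
- by move=> _; rewrite -[X in (X < _)%E]/(P (vecX X @^-1` _)) preimage_setT probability_setT ltry.
Qed.
End law.
Arguments vecX {R K d T} X.

Lemma indep_reindex d (T : measurableType d) (R : realType) (P : probability T R)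
  (I : eqType) (J : finType) (X : I -> {mfun T >-> R}) (f : J -> I) :
  injective f -> mutually_independent P X ->
  mutually_independent P (fun j => X (f j)).
Proof.
move=> finj iX s B us mB.
pose B' i := if [pick j | f j == i] is Some j then B j else setT.
have B'f j : B' (f j) = B j.
  rewrite /B'; case: pickP => [j' /eqP/finj -> //|/(_ j)]; by rewrite eqxx.
have mB' i : measurable (B' i) by rewrite /B'; case: pickP.
have -> : (\prod_(j <- s) P (X (f j) @^-1` B j) = \prod_(i <- map f s) P (X i @^-1` B' i))%E.
  by rewrite big_map; apply: eq_bigr => j _; rewrite B'f.
rewrite -(iX (map f s) B' _ mB'); last by rewrite map_inj_uniq.
congr (P _); apply/seteqP; split => w /=.
- move=> h _ /= /mapP [j js ->]; rewrite B'f; exact: h.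
- by move=> h j js; rewrite -B'f; apply: h; rewrite /= map_f.
Qed.

Lemma natr_minn (R : realType) (a b : nat) : (minn a b)%:R = Num.min (a%:R : R) b%:R.
Proof.
rewrite /minn; case: ltnP => h.
  by rewrite min_l // ler_nat ltnW.
by rewrite min_r // ler_nat.
Qed.

Section harq.
Variables (R : realType) (SNR : R) (L M : nat).
Variables (d : measure_display) (T : measurableType d) (P : probability T R).
Variables (hr hi : nat -> 'I_L -> {mfun T >-> R}).

Lemma meas_log2 : measurable_fun [set: R] (@log2 R).
Proof.
rewrite /log2; apply: measurable_funM => //; exact: measurable_ln.
Qed.

Lemma meas_Cround i : measurable_fun [set: T] (Cround SNR hr hi i).
Proof.
rewrite /Cround; apply: measurable_funM => //; apply: measurable_sum => j.
apply: measurableT_comp; first exact: meas_log2.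
apply: measurable_funD => //; apply: measurable_funM => //.
by apply: measurable_funD; apply: measurable_funX.
Qed.

Lemma meas_S t : measurable_fun [set: T] (fun w => \sum_(i < t) Cround SNR hr hi i w).
Proof. by apply: measurable_sum => i; exact: meas_Cround. Qed.

Lemma meas_Tlist (Rinit : R) (s : seq nat) :
  measurable_fun [set: T]
   (fun w => ((\big[minn/M]_(t <- s | Rinit < \sum_(i < t) Cround SNR hr hi i w) t)%:R : R)).
Proof.
elim: s => [|t s IH].
  rewrite (_ : (fun w => _) = (fun _ => M%:R)) //; apply/funext => w; by rewrite big_nil.
set S := fun t0 w => \sum_(i < t0) Cround SNR hr hi i w.
set G := fun w => ((\big[minn/M]_(t0 <- s | Rinit < S t0 w) t0)%:R : R).
rewrite (_ : (fun w => _) = (fun w => if Rinit < S t w then Num.min (t%:R : R) (G w) else G w)); last first.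
  by apply/funext => w; rewrite big_cons; case: ifP => //; rewrite natr_minn.
apply: measurable_fun_ifT => //.
  by apply: measurable_fun_ltr => //; exact: meas_S.
exact: measurable_minr.
Qed.

Lemma Tharq_bounds (Rinit : R) w : (1 <= M)%N ->
  (1 <= Tharq SNR M hr hi Rinit w <= M)%N.
Proof.
move=> M1; rewrite /Tharq big_nat_cond.
elim/big_ind: _ => //.
- by rewrite M1 leqnn.
- by move=> x y /andP[x1 xM] /andP[y1 yM]; rewrite leq_min x1 y1 /= (leq_trans (geq_minl _ _) xM).
- by move=> t /andP[/andP[t1 tM] _]; rewrite t1 -ltnS.
Qed.

Lemma Tharq_mono (R1 R2 : R) w : R1 <= R2 ->
  (Tharq SNR M hr hi R1 w <= Tharq SNR M hr hi R2 w)%N.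
Proof.
move=> R12; rewrite /Tharq; elim: (index_iota 1 M.+1) => [|t s IH].
  by rewrite !big_nil.
rewrite !big_cons.
case: ifP => h1; case: ifP => h2.
- by rewrite leq_min geq_minl /= (leq_trans (geq_minr _ _) IH).
- by rewrite (leq_trans (geq_minr _ _) IH).
- by rewrite (le_lt_trans R12 h2) in h1.
- exact: IH.
Qed.

End harq.

Section harqE.
Variables (R : realType) (SNR : R) (L M : nat).
Variables (d : measure_display) (T : measurableType d) (P : probability T R).
Variables (hr hi : nat -> 'I_L -> {mfun T >-> R}).
Hypothesis M1 : (1 <= M)%N.

Let Tf Rinit := fun w => ((Tharq SNR M hr hi Rinit w)%:R : R).
Definition Ef Rinit := fine ('E_P[fun w => (Tharq SNR M hr hi Rinit w)%:R]).

Let mTf Rinit : measurable_fun [set: T] (EFin \o Tf Rinit).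
Proof. apply/measurable_EFinP; exact: (@meas_Tlist _ SNR _ M _ _ hr hi Rinit (index_iota 1 M.+1)). Qed.

Lemma E_int Rinit : ('E_P[fun w => (Tharq SNR M hr hi Rinit w)%:R] = \int[P]_w (Tf Rinit w)%:E)%E.
Proof. by rewrite unlock. Qed.

Lemma E_fin Rinit : (1%:E <= 'E_P[fun w => (Tharq SNR M hr hi Rinit w)%:R] <= (M%:R)%:E)%E.
Proof.
rewrite E_int; apply/andP; split.
  rewrite (_ : 1%:E = \int[P]_w (cst 1%:E) w)%E; last first.
    by rewrite integral_cst // mul1e; apply/esym; exact: probability_setT.
  apply: (ge0_le_integral P measurableT) => //; first exact: mTf.
  move=> w _; rewrite /Tf lee_fin ler1n.
  by case/andP: (@Tharq_bounds _ SNR _ M _ _ hr hi Rinit w M1).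
rewrite (_ : (M%:R)%:E = \int[P]_w (cst (M%:R)%:E) w)%E; last first.
  rewrite integral_cst //; transitivity (((M%:R : R)%:E * 1)%E); first by rewrite mule1.
  by congr (_ * _)%E; apply/esym; exact: probability_setT.
apply: (ge0_le_integral P measurableT) => //.
- by move=> w _; rewrite /Tf lee_fin.
- exact: mTf.
- move=> w _; rewrite /Tf lee_fin ler_nat.
  by case/andP: (@Tharq_bounds _ SNR _ M _ _ hr hi Rinit w M1).
Qed.

Lemma E_eq Rinit : ('E_P[fun w => (Tharq SNR M hr hi Rinit w)%:R] = (Ef Rinit)%:E)%E /\ 1 <= Ef Rinit.
Proof.
have := E_fin Rinit; rewrite /Ef.
case: ('E_P[_])%E => [r||] /=.
- by rewrite !lee_fin => /andP[h _].
- by case/andP => _; rewrite leye_eq.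
- by [].
Qed.

Lemma Ef_mono R1 R2 : R1 <= R2 -> Ef R1 <= Ef R2.
Proof.
move=> R12; rewrite -lee_fin -(E_eq R1).1 -(E_eq R2).1 !E_int.
apply: (ge0_le_integral P measurableT) => //.
- by move=> w _; rewrite /Tf lee_fin.
- exact: mTf.
- exact: mTf.
- by move=> w _; rewrite /Tf lee_fin ler_nat Tharq_mono.
Qed.

End harqE.

Lemma card_pair (M L : nat) : #|{: 'I_M * 'I_L}| = (M * L)%N.
Proof. by rewrite card_prod !card_ord. Qed.

Definition epair (M L : nat) (p : 'I_M * 'I_L) : 'I_(M * L) :=
  cast_ord (card_pair M L) (enum_rank p).
Arguments epair {M L}.

Lemma epair_bij (M L : nat) : bijective (@epair M L).
Proof.
exists (fun k => enum_val (cast_ord (esym (card_pair M L)) k)) => p /=.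
  by rewrite /epair cast_ordK enum_rankK.
by rewrite /epair enum_valK cast_ordKV.
Qed.

Definition phi {R : realType} (SNR : R) (a b : R) := log2 (1 + SNR * (a ^+ 2 + b ^+ 2)).

Section reduction.
Variables (R : realType) (SNR : R) (L M : nat).
Let K : finType := (('I_M * 'I_L) * bool)%type.
Local Notation FT := (g_sigma_algebraType (rectG R K)).

Definition Fsum (f : FT) : R :=
  \sum_(i < M) (L%:R)^-1 * \sum_(j < L) phi SNR (f ((i, j), true)) (f ((i, j), false)).

Lemma meas_Fsum : measurable_fun [set: FT] Fsum.
Proof.
apply: measurable_sum => i; apply: measurable_funM => //; apply: measurable_sum => j.
apply: measurableT_comp; first exact: meas_log2.
apply: measurable_funD => //; apply: measurable_funM => //.
by apply: measurable_funD; apply: measurable_funX; exact: proj_meas.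
Qed.

Lemma meas_Fset x : measurable [set f : FT | Fsum f <= x].
Proof.
have := meas_Fsum measurableT _ (measurable_itv `]-oo, x]).
by rewrite setTI preimage_itvNyc.
Qed.

Variables (d : measure_display) (T : measurableType d) (P : probability T R).
Variables (hr hi : nat -> 'I_L -> {mfun T >-> R}).
Variables (d' : measure_display) (T' : measurableType d') (P' : probability T' R).
Variables (gr gi : 'I_(M * L) -> {mfun T' >-> R}).

Definition Uf (k : K) : {mfun T >-> R} :=
  if k.2 then hr (nat_of_ord (k.1).1) (k.1).2 else hi (nat_of_ord (k.1).1) (k.1).2.
Definition Vf (k : K) : {mfun T' >-> R} :=
  if k.2 then gr (epair k.1) else gi (epair k.1).

Hypothesis iidh : iid_CN01 P (fun p : nat * 'I_L => hr p.1 p.2) (fun p : nat * 'I_L => hi p.1 p.2).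
Hypothesis iidg : iid_CN01 P' gr gi.
Hypothesis M0 : (0 < M)%N.

Lemma indU : mutually_independent P Uf.
Proof.
have := @indep_reindex _ _ _ P _ K _
  (fun k : K => ((nat_of_ord (k.1).1, (k.1).2), k.2)) _ iidh.1.
apply.
by move=> [[i j] b] [[i' j'] b'] [] /val_inj -> -> ->.
Qed.

Lemma indV : mutually_independent P' Vf.
Proof.
have := @indep_reindex _ _ _ P' _ K _
  (fun k : K => (epair k.1, k.2)) _ iidg.1.
apply.
move=> [p b] [p' b'] [] /val_inj/enum_rank_inj -> -> //.
Qed.

Lemma margUV k B : measurable B -> P (Uf k @^-1` B) = P' (Vf k @^-1` B).
Proof.
move=> mB; case: k => [[i j] b].
have [a1 a2] := iidh.2 (nat_of_ord i, j) B mB.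
have [b1 b2] := iidg.2 (epair (i, j)) B mB.
case: b; rewrite /Uf /Vf /=.
- by transitivity (normal_prob 0 (Num.sqrt (1 / 2)) B); [exact: a1|exact/esym/b1].
- by transitivity (normal_prob 0 (Num.sqrt (1 / 2)) B); [exact: a2|exact/esym/b2].
Qed.

Lemma eps_harqE Rh :
  eps_harq P SNR M hr hi Rh = fine (P (vecX Uf @^-1` [set f : FT | Fsum f <= Rh])).
Proof. by []. Qed.

Lemma FsumV w : Fsum (vecX Vf w) =
  (L%:R)^-1 * \sum_(k < M * L) log2 (1 + SNR * sqnorm (gr k) (gi k) w).
Proof.
rewrite /Fsum -big_distrr /= pair_big /=.
rewrite [in RHS](reindex (@epair M L)) /=; last exact: onW_bij (epair_bij M L).
by congr (_ * _); apply: eq_bigr => -[i j] _.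
Qed.

Lemma eps_divE Rt :
  eps_div P' SNR gr gi Rt = fine (P' (vecX Vf @^-1` [set f : FT | Fsum f <= M%:R * Rt])).
Proof.
have Mpos : 0 < (M%:R : R) by rewrite ltr0n.
have aux x : (M%:R^-1 * x <= Rt) = (x <= M%:R * Rt).
  by rewrite -(ler_pM2l Mpos) mulrA mulfV ?mul1r // gt_eqF.
rewrite /eps_div; congr (fine (P' _)); apply/seteqP; split => w /=;
  by rewrite FsumV natrM invfM -mulrA aux.
Qed.

Lemma eps_rel Rt : eps_harq P SNR M hr hi (M%:R * Rt) = eps_div P' SNR gr gi Rt.
Proof.
rewrite eps_harqE eps_divE; congr fine.
apply: (@law_eq _ _ _ _ _ _ _ _ _ _ indU indV margUV); exact: meas_Fset.
Qed.

Lemma eps_div_le1 Rt : eps_div P' SNR gr gi Rt <= 1.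
Proof.
rewrite eps_divE.
have mA : measurable (vecX Vf @^-1` [set f : FT | Fsum f <= M%:R * Rt]).
  rewrite -[X in measurable X]setTI; apply: (measurable_funP (vecX Vf)) => //.
  exact: meas_Fset.
have := probability_le1 P' mA; have := measure_ge0 P' (vecX Vf @^-1` [set f : FT | Fsum f <= M%:R * Rt]).
by case: (P' _) => [r||] //=; rewrite !lee_fin.
Qed.

End reduction.

Theorem theorem1 (R : realType) (SNR : R) (L M : nat)
  (d : measure_display) (T : measurableType d) (P : probability T R)
  (hr hi : nat -> 'I_L -> {mfun T >-> R})
  (d' : measure_display) (T' : measurableType d') (P' : probability T' R)
  (gr gi : 'I_(M * L) -> {mfun T' >-> R})
  (RML : R) :
  0 < SNR -> (1 <= L)%N -> (1 <= M)%N ->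
  iid_CN01 P (fun p : nat * 'I_L => hr p.1 p.2) (fun p : nat * 'I_L => hi p.1 p.2) ->
  iid_CN01 P' gr gi ->
  (* RML is the largest maximizer of the non-HARQ goodput over R > 0 *)
  0 < RML ->
  (forall Rt, 0 < Rt -> goodput_div P' SNR gr gi Rt <= goodput_div P' SNR gr gi RML) ->
  (forall R', 0 < R' ->
     (forall Rt, 0 < Rt -> goodput_div P' SNR gr gi Rt <= goodput_div P' SNR gr gi R') ->
     R' <= RML) ->
  forall Rstar, 0 < Rstar ->
    (forall Rinit, 0 < Rinit -> eta_harq P SNR M hr hi Rinit <= eta_harq P SNR M hr hi Rstar) ->
    Rstar / M%:R <= RML.
Proof.
move=> SNR0 L1 M1 iidh iidg RML0 RMLmax RMLlargest Rstar Rstar0 Rstarmax.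
have M0 : (0 < M)%N := M1.
pose m : R := M%:R.
have m0 : 0 < m by rewrite ltr0n.
pose g := goodput_div P' SNR gr gi.
pose E := @Ef R SNR L M d T P hr hi.
have ER := @eps_rel R SNR L M d T P hr hi d' T' P' gr gi iidh iidg M0.
have eps1 := @eps_div_le1 R SNR L M d' T' P' gr gi.
rewrite leNgt; apply/negP => H.
pose R' := Rstar / m.
have R'0 : 0 < R' by rewrite divr_gt0.
have gs_lt : g R' < g RML.
  rewrite ltNge; apply/negP => hge.
  have : R' <= RML.
    apply: RMLlargest => // Rt Rt0; exact: le_trans (RMLmax Rt Rt0) hge.
  by rewrite leNgt H.
have gR0 : 0 <= g RML.
  rewrite /g /goodput_div; apply: mulr_ge0; first exact: ltW.
  by rewrite subr_ge0 eps1.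
pose Rh := m * RML.
have Rh0 : 0 < Rh by rewrite mulr_gt0.
have RhRs : Rh <= Rstar.
  by rewrite /Rh mulrC; apply: ltW; rewrite -ltr_pdivlMr.
have etah : eta_harq P SNR M hr hi Rh = m * g RML / E Rh.
  by rewrite /eta_harq /Rh ER /g /goodput_div mulrA.
have eRs : m * R' = Rstar by rewrite /R' mulrC divfK // gt_eqF.
have etas : eta_harq P SNR M hr hi Rstar = m * g R' / E Rstar.
  have epss : eps_harq P SNR M hr hi Rstar = eps_div P' SNR gr gi R' by rewrite -ER eRs.
  rewrite /eta_harq epss; congr (_ / _).
  by rewrite /g /goodput_div mulrA eRs.
have E1 : 1 <= E Rh := (@E_eq R SNR L M d T P hr hi M1 Rh).2.
have E12 : E Rh <= E Rstar := @Ef_mono R SNR L M d T P hr hi M1 _ _ RhRs.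
have := Rstarmax Rh Rh0; rewrite etah etas => hle.
clearbody g E.
have e1 : 0 < E Rh by apply: lt_le_trans E1.
have e2 : 0 < E Rstar by apply: lt_le_trans E12.
have uv : (E Rstar)^-1 <= (E Rh)^-1 by rewrite lef_pV2 ?posrE.
have v0 : 0 < (E Rstar)^-1 by rewrite invr_gt0.
move: (E Rh) (E Rstar) e1 e2 uv v0 hle => e1' e2' _ _ uv v0.
move: (g RML) (g R') gs_lt gR0 => a b ab a0 hle.
have : m * b / e2' < m * a / e1'.
  apply: (@lt_le_trans _ _ (m * a / e2')).
    by rewrite -!mulrA ltr_pM2l // ltr_pM2r.
  by rewrite -!mulrA ler_pM2l // ler_wpM2l.
by rewrite ltNge hle.
Qed.
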